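(* Let $U\in\mathbb{R}^{d\times n}$ be a frame, $z\in\mathbb{R}^n_{++}$, $c\in\mathbb{R}^n_{++}$ with $\langle c,1_n\rangle=d$, let $\emptyset\ne T\subsetneq[n]$, and let $h:=h^{U,z}_T$. Then: (1) $h$ is an increasing function of $\alpha$; (2) $\lim_{\alpha\to\infty}h(\alpha)=\operatorname{rk}(U_T)$; (3) $\langle c,1_T\rangle-h(1)\ge\gamma$, where $\gamma$ is the margin of $T$; (4) if $\operatorname{rk}(U_T)\ge\langle c,1_T\rangle$, then for the margin $\gamma$ of $T$ and any $\delta\in[0,\gamma)$, there is a finite solution $\alpha<\infty$ (with $\alpha\ge1$) to the equation $h(\alpha)=h(1)+\delta$.
   Context: A frame is a full row rank matrix $U=(u_1,\dots,u_n)\in\mathbb{R}^{d\times n}$; $U_T,Z_T$ denote restrictions to $T$, $\bar T=[n]\setminus T$, $Z=\mathrm{diag}(z)$, $1_T$ the indicator of $T$, $\circ$ the entrywise product. $\mathrm{lev}^U_j(z):=z_ju_j^{\mathsf T}(UZU^{\mathsf T})^{-1}u_j$. Margin of $T$: the largest $\gamma\ge0$ such that some $\nu\in\mathbb{R}$ satisfies $\max_{j\in T}(\mathrm{lev}^U_j(z)-c_j)\le\nu-\gamma\le\nu+\gamma\le\min_{j\notin T}(\mathrm{lev}^U_j(z)-c_j)$. Progress function: $h^{U,z}_T(\alpha):=\sum_{j\in T}\mathrm{lev}^U_j(z\circ(1_{\bar T}+\alpha1_T))=\mathrm{tr}[\alpha U_TZ_TU_T^{\mathsf T}(U_{\bar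 T}Z_{\bar T}U_{\bar T}^{\mathsf T}+\alpha U_TZ_TU_T^{\mathsf T})^{-1}]$ for $\alpha>0$. *)

(* Defs.v *)
From HB Require Import structures.
From mathcomp Require Import all_boot all_order all_algebra.
From mathcomp Require Import all_classical all_reals topology normedtype.
Set Implicit Arguments. Unset Strict Implicit. Unset Printing Implicit Defensive.
Import Order.TTheory GRing.Theory Num.Theory.
Local Open Scope ring_scope.

Section FrameDefs.
Variables (R : realType) (d n : nat).

Definition frame (U : 'M[R]_(d, n)) : Prop := \rank U = d.

Definition Zdiag (z : 'I_n -> R) : 'M[R]_n := diag_mx (\row_k z k).

Definition lev (U : 'M[R]_(d, n)) (z : 'I_n -> R) (j : 'I_n) : R :=
  z j * (((col j U)^T *m invmx (U *m Zdiag z *m U^T) *m col j U) ord0 ord0).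

Definition zscale (T : {set 'I_n}) (z : 'I_n -> R) (alpha : R) : 'I_n -> R :=
  fun k => z k * (if k \in T then alpha else 1).

Definition progress (U : 'M[R]_(d, n)) (z : 'I_n -> R) (T : {set 'I_n})
  (alpha : R) : R :=
  \sum_(j in T) lev U (zscale T z alpha) j.

Definition subcols (U : 'M[R]_(d, n)) (T : {set 'I_n}) : 'M[R]_(d, #|T|) :=
  colsub (fun k : 'I_#|T| => enum_val k) U.

Definition margin_feasible (U : 'M[R]_(d, n)) (z c : 'I_n -> R)
  (T : {set 'I_n}) (gamma : R) : Prop :=
  0 <= gamma /\ exists nu : R,
    (forall j, j \in T -> lev U z j - c j <= nu - gamma) /\
    (forall j, j \notin T -> nu + gamma <= lev U z j - c j).

Definition is_margin (U : 'M[R]_(d, n)) (z c : 'I_n -> R)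
  (T : {set 'I_n}) (gamma : R) : Prop :=
  margin_feasible U z c T gamma /\
  forall g, margin_feasible U z c T g -> g <= gamma.

End FrameDefs.

(* Main.v *)
Require Import Defs.
From HB Require Import structures.
From mathcomp Require Import all_boot all_order all_algebra.
From mathcomp Require Import all_classical all_reals topology normedtype.
From mathcomp Require Import derive ring lra.
Import Order.TTheory GRing.Theory Num.Theory.
Import numFieldNormedType.Exports.
Local Open Scope classical_set_scope.
Local Open Scope ring_scope.

Set Implicit Arguments. Unset Strict Implicit. Unset Printing Implicit Defensive.

Definition psd (R : realFieldType) m (X : 'M[R]_m) :=
  forall v : 'rV_m, 0 <= (v *m X *m v^T) 0 0.
Definition posdef (R : realFieldType) m (X : 'M[R]_m) :=
  forall v : 'rV_m, v != 0 -> 0 < (v *m X *m v^T) 0 0.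

Lemma quad_diag (R : realFieldType) q (w : 'I_q -> R) (y : 'rV[R]_q) :
  (y *m diag_mx (\row_k w k) *m y^T) 0 0 = \sum_k w k * (y 0 k) ^+ 2.
Proof.
rewrite mul_mx_diag !mxE; apply: eq_bigr => k _; rewrite !mxE; ring.
Qed.

Lemma quad_congr (R : realFieldType) p q (P : 'M[R]_(p, q)) (X : 'M[R]_q) (v : 'rV_p) :
  v *m (P *m X *m P^T) *m v^T = (v *m P) *m X *m (v *m P)^T.
Proof. by rewrite trmx_mul !mulmxA. Qed.

Lemma posdef_psd (R : realFieldType) m (X : 'M[R]_m) : posdef X -> psd X.
Proof.
move=> pX v; have [->|vn0] := eqVneq v 0; last exact/ltW/pX.
by rewrite mul0mx mul0mx mxE.
Qed.

Lemma psd_diag (R : realFieldType) q (w : 'I_q -> R) :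
  (forall k, 0 <= w k) -> psd (diag_mx (\row_k w k)).
Proof.
move=> w0 v; rewrite quad_diag; apply: sumr_ge0 => k _.
by rewrite mulr_ge0 // sqr_ge0.
Qed.

Lemma posdef_diag (R : realFieldType) q (w : 'I_q -> R) :
  (forall k, 0 < w k) -> posdef (diag_mx (\row_k w k)).
Proof.
move=> w0 v vn0; rewrite quad_diag lt_def; apply/andP; split; last first.
  by apply: sumr_ge0 => k _; rewrite mulr_ge0 ?sqr_ge0 // ltW.
apply/eqP => /psumr_eq0P H; case/eqP: vn0; apply/rowP => k.
have {}H := H (fun i _ => mulr_ge0 (ltW (w0 i)) (sqr_ge0 _)) k isT.
move: H => /eqP; rewrite mulf_eq0 (gt_eqF (w0 k)) /= sqrf_eq0 mxE => /eqP //.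
Qed.

Lemma psd_congr (R : realFieldType) p q (P : 'M[R]_(p, q)) (X : 'M[R]_q) :
  psd X -> psd (P *m X *m P^T).
Proof. by move=> pX v; rewrite quad_congr. Qed.

Lemma posdef_congr (R : realFieldType) p q (P : 'M[R]_(p, q)) (X : 'M[R]_q) :
  posdef X -> row_free P -> posdef (P *m X *m P^T).
Proof.
move=> pX fP v vn0; rewrite quad_congr; apply: pX.
by rewrite mulmx_free_eq0.
Qed.

Lemma posdef_unit (R : realFieldType) m (X : 'M[R]_m) : posdef X -> X \in unitmx.
Proof.
move=> pX; rewrite -row_free_unit -kermx_eq0; apply/eqP/row_matrixP => i.
rewrite row0; apply/eqP/negPn/negP => vn0.
have := pX _ vn0; rewrite -row_mul mulmx_ker row0 mul0mx mxE ltxx //.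
Qed.

Lemma posdef_inv (R : realFieldType) m (X : 'M[R]_m) :
  posdef X -> X^T = X -> posdef (invmx X).
Proof.
move=> pX sX v vn0; have uX := posdef_unit pX.
have yn0 : v *m invmx X != 0.
  apply: contraNneq vn0 => H; by rewrite -(mulmxKV uX v) H mul0mx.
have := pX _ yn0; rewrite trmx_mul trmx_inv sX !mulmxA mulmxKV //.
Qed.

Lemma psd_diag_ge0 (R : realFieldType) m (X : 'M[R]_m) k : psd X -> 0 <= X k k.
Proof.
move=> pX; have := pX (delta_mx 0 k).
rewrite -rowE trmx_delta -colE !mxE //.
Qed.

Lemma trace_gram (R : realFieldType) p q (P : 'M[R]_(p,q)) (w : 'I_q -> R) (N : 'M_p) :
  \tr (P *m diag_mx (\row_k w k) *m P^T *m N) = \sum_k w k * (P^T *m N *m P) k k.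
Proof.
rewrite -!mulmxA mxtrace_mulC -!mulmxA mul_diag_mx /mxtrace.
by apply: eq_bigr => k _; rewrite !mxE.
Qed.

Lemma entry_quad (R : realFieldType) p q (P : 'M[R]_(p,q)) (X : 'M_p) j :
  ((col j P)^T *m X *m col j P) 0 0 = (P^T *m X *m P) j j.
Proof.
rewrite tr_col -row_mul colE mulmxA -row_mul -colE.
by rewrite /row /col !mxE.
Qed.

Definition wgt (R : realType) n (S : {set 'I_n}) (w : 'I_n -> R) : 'I_n -> R :=
  fun k => if k \in S then w k else 0.

Definition gram (R : realType) d n (U : 'M[R]_(d, n)) (w : 'I_n -> R) : 'M[R]_d :=
  U *m diag_mx (\row_k w k) *m U^T.

Lemma gram_sym (R : realType) d n (U : 'M[R]_(d, n)) w : (gram U w)^T = gram U w.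
Proof. by rewrite /gram !trmx_mul trmxK tr_diag_mx mulmxA. Qed.

Lemma gram_posdef (R : realType) d n (U : 'M[R]_(d, n)) w :
  frame U -> (forall k, 0 < w k) -> posdef (gram U w).
Proof.
move=> fU w0; apply: posdef_congr; first exact: posdef_diag.
by rewrite /row_free fU.
Qed.

Lemma gram_psd (R : realType) d n (U : 'M[R]_(d, n)) w :
  (forall k, 0 <= w k) -> psd (gram U w).
Proof. by move=> w0; apply: psd_congr; apply: psd_diag. Qed.

Lemma gram_unit (R : realType) d n (U : 'M[R]_(d, n)) w :
  frame U -> (forall k, 0 < w k) -> gram U w \in unitmx.
Proof. by move=> fU w0; apply/posdef_unit/gram_posdef. Qed.

Lemma wsum_trace (R : realType) d n (U : 'M[R]_(d, n)) (f : 'I_n -> R) (X : 'M_d) :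
  \sum_j f j * (U^T *m X *m U) j j = \tr (gram U f *m X).
Proof. by rewrite /gram trace_gram. Qed.

Lemma levE (R : realType) d n (U : 'M[R]_(d, n)) w j :
  lev U w j = w j * (U^T *m invmx (gram U w) *m U) j j.
Proof. by rewrite /lev entry_quad. Qed.

Lemma gram_split (R : realType) d n (U : 'M[R]_(d, n)) T z a :
  gram U (zscale T z a) = gram U (wgt (~: T) z) + a *: gram U (wgt T z).
Proof.
rewrite /gram scalemxAl scalemxAr -mulmxDl -mulmxDr; congr (_ *m _ *m _).
apply/matrixP => i j; rewrite !mxE /zscale /wgt finset.in_setC.
case: (i \in T); case: (i == j) => /=; rewrite ?mulr0 ?mulr1n ?mulr0n ?addr0 ?add0r //.
all: try by rewrite mulrC.
by rewrite mulr1.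
Qed.

Lemma gram_sum (R : realType) d n (U : 'M[R]_(d, n)) w :
  frame U -> (forall k, 0 < w k) -> \sum_j lev U w j = d%:R.
Proof.
move=> fU w0; under eq_bigr do rewrite levE.
by rewrite wsum_trace mulmxV ?mxtrace1 //; apply: gram_unit.
Qed.

Lemma progressE (R : realType) d n (U : 'M[R]_(d, n)) T z a :
  progress U z T a =
  a * \tr (gram U (wgt T z) *m invmx (gram U (zscale T z a))).
Proof.
rewrite /progress big_mkcond /= -wsum_trace mulr_sumr; apply: eq_bigr => j _.
rewrite levE /zscale /wgt; case: (j \in T); rewrite ?mul0r ?mulr0 //.
by rewrite mulrA [z j * a]mulrC.
Qed.

Lemma tr_gram_ge0 (R : realType) d n (U : 'M[R]_(d, n)) w (N : 'M_d) :
  (forall k, 0 <= w k) -> psd (U^T *m N *m U) -> 0 <= \tr (gram U w *m N).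
Proof.
move=> w0 pN; rewrite -wsum_trace; apply: sumr_ge0 => k _.
by rewrite mulr_ge0 // psd_diag_ge0.
Qed.

Lemma wgt_ge0 (R : realType) n (S : {set 'I_n}) (z : 'I_n -> R) :
  (forall k, 0 < z k) -> forall k, 0 <= wgt S z k.
Proof. by move=> z0 k; rewrite /wgt; case: (k \in S) => //; apply: ltW. Qed.

Lemma zscale_gt0 (R : realType) n T (z : 'I_n -> R) a :
  (forall k, 0 < z k) -> 0 < a -> forall k, 0 < zscale T z a k.
Proof. by move=> z0 a0 k; rewrite /zscale; case: (k \in T); rewrite mulr_gt0. Qed.

Lemma progress_alt (R : realType) d n (U : 'M[R]_(d, n)) T z a :
  frame U -> (forall k, 0 < z k) -> 0 < a ->
  progress U z T a =
  d%:R - \tr (gram U (wgt (~: T) z) *m invmx (gram U (zscale T z a))).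
Proof.
move=> fU z0 a0; rewrite progressE.
have uM := gram_unit fU (zscale_gt0 T z0 a0).
have := mulmxV uM; rewrite {1}gram_split mulmxDl => /(congr1 mxtrace).
rewrite mxtraceD mxtrace1 -scalemxAl mxtraceZ => <-.
by rewrite addrC addKr.
Qed.

Lemma progress_mono (R : realType) d n (U : 'M[R]_(d, n)) T z a b :
  frame U -> (forall k, 0 < z k) -> 0 < a -> a <= b ->
  progress U z T a <= progress U z T b.
Proof.
move=> fU z0 a0 ab; have b0 : 0 < b by apply: lt_le_trans ab.
rewrite !progress_alt // lerD2l lerN2 -subr_ge0.
set A0 := gram U (wgt T z); set B0 := gram U (wgt (~: T) z).
set Ma := gram U (zscale T z a); set Mb := gram U (zscale T z b).
have uA := gram_unit fU (zscale_gt0 T z0 a0).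
have uB := gram_unit fU (zscale_gt0 T z0 b0).
set X := invmx Ma; set Y := invmx Mb.
have dM : Mb - Ma = (b - a) *: A0.
  by rewrite /Ma /Mb !gram_split opprD addrACA subrr add0r -scalerBl.
have F1 : X - Y = (b - a) *: (Y *m A0 *m X).
  have : Y *m (Mb - Ma) *m X = X - Y.
    by rewrite mulmxBr mulmxBl mulVmx // mul1mx -mulmxA mulmxV // mulmx1.
  by rewrite dM -scalemxAr -scalemxAl => <-.
have F2 : X - Y = (b - a) *: (X *m A0 *m Y).
  have : X *m (Mb - Ma) *m Y = X - Y.
    by rewrite mulmxBr mulmxBl -mulmxA mulmxV // mulmx1 mulVmx // mul1mx.
  by rewrite dM -scalemxAr -scalemxAl => <-.
have F3 : X - Y = (b - a) *: (Y *m A0 *m Y) + (b - a) ^+ 2 *: (Y *m A0 *m X *m A0 *m Y).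
  have HX : X = Y + (b - a) *: (X *m A0 *m Y) by rewrite -F2 addrC subrK.
  rewrite {1}F1 {1}HX mulmxDr -scalemxAr scalerDr scalerA -expr2 !mulmxA.
  done.
have sY : Y^T = Y by rewrite trmx_inv gram_sym.
have sA : A0^T = A0 by rewrite gram_sym.
have pX : psd X.
  apply/posdef_psd/posdef_inv; last exact: gram_sym.
  exact/gram_posdef/zscale_gt0.
rewrite -raddfB /= -mulmxBr F3 mulmxDr -!scalemxAr mxtraceD !mxtraceZ.
have ba0 : 0 <= b - a by rewrite subr_ge0.
apply: addr_ge0; apply: mulr_ge0; rewrite ?exprn_ge0 //; apply: tr_gram_ge0.
- exact: wgt_ge0.
- have -> : U^T *m (Y *m A0 *m Y) *m U = (U^T *m Y) *m A0 *m (U^T *m Y)^T.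
    by rewrite trmx_mul trmxK sY !mulmxA.
  by apply: psd_congr; apply: gram_psd; apply: wgt_ge0.
- exact: wgt_ge0.
- have -> : U^T *m (Y *m A0 *m X *m A0 *m Y) *m U =
            (U^T *m Y *m A0) *m X *m (U^T *m Y *m A0)^T.
    by rewrite trmx_mul sA trmx_mul trmxK sY !mulmxA.
  exact: psd_congr.
Qed.

Lemma zscale1 (R : realType) n T (z : 'I_n -> R) : zscale T z 1 = z.
Proof. by apply/funext => k; rewrite /zscale; case: (k \in T); rewrite mulr1. Qed.

Lemma margin_part (R : realType) d n (U : 'M[R]_(d, n)) (z c : 'I_n -> R) T gamma :
  frame U -> (forall j, 0 < z j) -> \sum_j c j = d%:R ->
  T != finset.set0 -> T != finset.setTfor 'I_n ->
  is_margin U z c T gamma -> gamma <= \sum_(j in T) c j - progress U z T 1.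
Proof.
move=> fU z0 sc Tn0 TnT [[g0 [nu [H1 H2]]] _].
have tot := gram_sum fU z0.
rewrite /progress zscale1.
set S := \sum_(j in T) (lev U z j - c j).
have ES : \sum_(j in T) c j - \sum_(j in T) lev U z j = - S.
  by rewrite /S sumrB opprB.
have S' : \sum_(j in ~: T) (lev U z j - c j) = - S.
  have : \sum_j (lev U z j - c j) = 0 by rewrite sumrB tot sc subrr.
  rewrite (bigID (mem T)) /=.
  have -> : \sum_(i | mem T i) (lev U z i - c i) = S by apply: eq_bigl.
  move/eqP; rewrite addr_eq0 => /eqP ->; rewrite opprK; apply: eq_bigl => j.
  by rewrite finset.in_setC.
rewrite ES.
have k1 : 1 <= #|T|%:R :> R by rewrite ler1n card_gt0.
have m1 : 1 <= #|~: T|%:R :> R.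
  rewrite ler1n card_gt0; apply: contraNneq TnT => /eqP.
  by move=> /eqP H; rewrite -[T]finset.setCK H finset.setC0.
have B1 : S <= #|T|%:R * (nu - gamma).
  by rewrite /S mulr_natl -sumr_const; apply: ler_sum => j jT; apply: H1.
have B2 : #|~: T|%:R * (nu + gamma) <= - S.
  rewrite -S' mulr_natl -sumr_const; apply: ler_sum => j jT; apply: H2.
  by rewrite finset.in_setC in jT.
have [nu0|nu0] := lerP 0 nu; first nra.
nra.
Qed.

Lemma limit_from_g (R : realType) (h g : R -> R) (l : R) :
  (forall a, 1 <= a -> h a = g a^-1) -> {for 0, continuous g} -> g 0 = l ->
  h a @[a --> +oo] --> l.
Proof.
move=> hg gc gl.
have inv0 : (fun a : R => a^-1) @ +oo --> (0 : R).
  apply/(@cvgrVy _ _ _ _ (fun a : R => a^-1)).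
    by near=> a; rewrite invr_gt0.
  have -> : unstable.inv_fun (fun a : R => a^-1) = id.
    by apply/funext => a /=; rewrite /unstable.inv_fun invrK.
  exact: cvg_id.
have : (g \o (fun a : R => a^-1)) @ +oo --> l.
  by rewrite -gl; apply: cvg_comp inv0 gc.
apply: cvg_trans; apply: near_eq_cvg.
by near=> a; rewrite /= hg.
Unshelve. all: by end_near.
Qed.

Lemma ivt_from_g (R : realType) (h g : R -> R) (v : R) :
  (forall t, 0 <= t <= 1 -> {for t, continuous g}) ->
  (forall t, 0 < t <= 1 -> h t^-1 = g t) ->
  g 1 <= v -> v < g 0 ->
  exists a, 1 <= a /\ h a = v.
Proof.
move=> gc hg g1 g0.
have [t tin gt] : exists2 t, t \in `[(0:R), 1] & g t = v.
  apply: IVT => //.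
    apply: continuous_in_subspaceT => t; rewrite inE /= => tin.
    by apply: gc; move: tin; rewrite in_itv.
  rewrite ge_min le_max g1 orbT /= ltW //.
move: tin; rewrite in_itv /= => /andP[t0 t1].
have tpos : 0 < t.
  rewrite lt_def t0 andbT; apply/eqP => t00; move: g0; rewrite -t00 gt ltxx //.
exists t^-1; split; first by rewrite invr_ge1 // ?unitfE ?gt_eqF.
by rewrite hg ?tpos.
Qed.

Lemma rat_repr (R : realType) r (C : 'M[R]_r) : exists p q : {poly R},
  forall t, p.[t] = \det (1%:M + t *: C) /\
   (1%:M + t *: C \in unitmx -> \tr (invmx (1%:M + t *: C)) = q.[t] / p.[t]).
Proof.
pose Cp : 'M[{poly R}]_r := \matrix_(i, j) ((i == j)%:R%:P + (C i j)%:P * 'X).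
have ev t : map_mx (horner_eval t) Cp = 1%:M + t *: C.
  apply/matrixP => i j; rewrite !mxE /horner_eval !hornerE /=.
  by rewrite [C i j * t]mulrC.
exists (\det Cp); exists (\tr (\adj Cp)) => t.
have Ep : (\det Cp).[t] = \det (1%:M + t *: C).
  by rewrite -ev det_map_mx.
have Eq : (\tr (\adj Cp)).[t] = \tr (\adj (1%:M + t *: C)).
  rewrite -ev -map_mx_adj /mxtrace horner_sum.
  by apply: eq_bigr => i _; rewrite [RHS]mxE.
split => // uM.
by rewrite /invmx uM mxtraceZ Ep Eq mulrC.
Qed.

Lemma rat_cont (R : realType) (p q : {poly R}) t :
  p.[t] != 0 -> {for t, continuous (fun x => q.[x] / p.[x])}.
Proof.
move=> pt; apply: continuousM; first exact: continuous_horner.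
by apply: continuousV => //; exact: continuous_horner.
Qed.

Lemma A0_fact (R : realType) d n (U : 'M[R]_(d, n)) T z :
  gram U (wgt T z) =
  subcols U T *m diag_mx (\row_k z (enum_val k)) *m (subcols U T)^T.
Proof.
apply/matrixP => i l; rewrite /gram !mul_mx_diag !mxE.
transitivity (\sum_(k in T) U i k * z k * U l k).
  rewrite [RHS]big_mkcond /=; apply: eq_bigr => k _; rewrite !mxE /wgt.
  by case: (k \in T); rewrite ?mulr0 ?mul0r.
rewrite big_enum_val; apply: eq_bigr => k _; by rewrite !mxE.
Qed.

Lemma lmod_aux (R : realType) (V : lmodType R) (a : R) (v w : V) :
  a *: v + (w - (a - 1) *: v - v) = w.
Proof.
rewrite -addrA -opprD -[X in (_ - 1) *: _ + X]scale1r -scalerDl subrK.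
by rewrite addrCA subrr addr0.
Qed.

Lemma key (R : realType) d n (U : 'M[R]_(d, n)) T z :
  frame U -> (forall k, 0 < z k) ->
  exists C : 'M[R]_(\rank (subcols U T)), forall a, 0 < a ->
    (1%:M + a^-1 *: C) \in unitmx /\
    progress U z T a = \tr (invmx (1%:M + a^-1 *: C)).
Proof.
move=> fU z0.
set UT := subcols U T; set W := col_base UT; set V := row_base UT.
set E := V *m diag_mx (\row_k z (enum_val k)) *m V^T.
set A0 := gram U (wgt T z).
have A0E : A0 = W *m E *m W^T.
  rewrite /A0 A0_fact -/UT.
  have -> : UT *m diag_mx (\row_k z (enum_val k)) *m UT^T =
            W *m V *m diag_mx (\row_k z (enum_val k)) *m (W *m V)^T.
    by rewrite /W /V mulmx_base.
  by rewrite trmx_mul /E !mulmxA.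
have pE : posdef E.
  by apply: posdef_congr; [apply: posdef_diag => k; apply: z0 | apply: row_base_free].
have uE := posdef_unit pE.
set M1 := gram U (zscale T z 1); set X1 := invmx M1.
have uM1 : M1 \in unitmx := gram_unit fU (zscale_gt0 T z0 ltr01).
have pX1 : posdef X1.
  by apply: posdef_inv; [apply: gram_posdef fU (zscale_gt0 T z0 ltr01) | apply: gram_sym].
have fW : row_free W^T by rewrite /row_free mxrank_tr; exact: col_base_full.
clearbody E W V.
set K := W^T *m X1 *m W.
have pK : posdef K by have := posdef_congr pX1 fW; rewrite trmxK.
have uK := posdef_unit pK.
exists (invmx K *m invmx E - 1%:M) => a a0.
set Ma := gram U (zscale T z a); set X := invmx Ma.
have uMa : Ma \in unitmx := gram_unit fU (zscale_gt0 T z0 a0).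
set N := W^T *m X *m W.
have Msplit : Ma = M1 + (a - 1) *: A0.
  by rewrite /Ma /M1 /A0 !gram_split -addrA -scalerDl [1 + _]addrC subrK.
have relX : X1 = X + (a - 1) *: (X1 *m A0 *m X).
  have : X1 *m Ma *m X = X1 by rewrite -mulmxA mulmxV // mulmx1.
  rewrite Msplit mulmxDr mulmxDl mulVmx // mul1mx -scalemxAr -scalemxAl => H.
  by rewrite -{1}H.
have rel : K = N + (a - 1) *: (K *m E *m N).
  rewrite {1}/K relX mulmxDr mulmxDl -scalemxAr -scalemxAl A0E /N /K !mulmxA.
  done.
set P := E *m N.
have H1 : invmx K *m N = 1%:M - (a - 1) *: P.
  have : invmx K *m K = 1%:M by rewrite mulVmx.
  rewrite {2}rel mulmxDr -scalemxAr (mulmxA (invmx K) (K *m E)) (mulmxA (invmx K) K).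
  rewrite mulVmx // mul1mx -/P => <-.
  by rewrite addrK.
have CP : (invmx K *m invmx E - 1%:M) *m P = invmx K *m N - P.
  rewrite mulmxBl mul1mx /P (mulmxA (invmx K *m invmx E) E) -(mulmxA (invmx K) (invmx E) E).
  by rewrite mulVmx // mulmx1.
have AB : (1%:M + a^-1 *: (invmx K *m invmx E - 1%:M)) *m (a *: P) = 1%:M.
  rewrite mulmxDl mul1mx -scalemxAl -scalemxAr scalerA mulVf ?gt_eqF // scale1r.
  by rewrite CP H1 lmod_aux.
move: AB; set L := 1%:M + _ => AB.
have [uL _] := mulmx1_unit AB.
split => //.
have -> : invmx L = a *: P.
  have -> : invmx L = invmx L *m (L *m (a *: P)) by rewrite AB mulmx1.
  by rewrite mulmxA mulVmx // mul1mx.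
rewrite progressE -/A0 -/Ma -/X A0E mxtraceZ; congr (_ * _).
rewrite -mulmxA -mulmxA mxtrace_mulC.
by rewrite /P /N !mulmxA.
Qed.

Unset Implicit Arguments. Set Strict Implicit.

Theorem proposition2p13 (R : realType) (d n : nat) (U : 'M[R]_(d, n))
  (z c : 'I_n -> R) (T : {set 'I_n}) :
  frame U ->
  (forall j, 0 < z j) ->
  (forall j, 0 < c j) ->
  \sum_j c j = d%:R ->
  T != finset.set0 -> T != finset.setTfor 'I_n ->
  [/\ (forall a b : R, 0 < a -> a <= b -> progress U z T a <= progress U z T b),
      progress U z T a @[a --> +oo] --> ((\rank (subcols U T))%:R : R),
      (forall gamma, is_margin U z c T gamma ->
         gamma <= \sum_(j in T) c j - progress U z T 1) &
      ((\sum_(j in T) c j <= (\rank (subcols U T))%:R) ->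
       forall gamma, is_margin U z c T gamma ->
       forall delta : R, 0 <= delta -> delta < gamma ->
       exists alpha : R, 1 <= alpha /\
         progress U z T alpha = progress U z T 1 + delta)].
Proof.
move=> fU z0 c0 sc Tn0 TnT.
have [C HC] := key T fU z0.
have [p [q Hpq]] := rat_repr C.
pose g := fun t : R => q.[t] / p.[t].
have unit_t : forall t : R, 0 < t -> (1%:M + t *: C) \in unitmx.
  by move=> t t0; have := (HC t^-1 (ltac:(by rewrite invr_gt0))).1; rewrite invrK.
have pne : forall t : R, 0 <= t <= 1 -> p.[t] != 0.
  move=> t /andP[t0 _]; rewrite (Hpq t).1.
  have [->|tn0] := eqVneq t 0.
    by rewrite scale0r addr0 det1 oner_neq0.
  have := unit_t t; rewrite unitmxE unitfE; apply.
  by rewrite lt_def tn0.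
have hg : forall a : R, 0 < a -> progress U z T a = g a^-1.
  move=> a a0; have [uL ->] := HC a a0.
  by rewrite (Hpq a^-1).2.
have g0 : g 0 = (\rank (subcols U T))%:R.
  have := (Hpq 0).2; rewrite scale0r addr0 unitmx1 invmx1 mxtrace1 => /(_ isT) H.
  by rewrite /g -H.
have gc : forall t : R, 0 <= t <= 1 -> {for t, continuous g}.
  by move=> t /pne; apply: rat_cont.
have m3 := fun gamma => @margin_part R d n U z c T gamma fU z0 sc Tn0 TnT.
split.
- by move=> a b a0 ab; apply: progress_mono.
- apply: (@limit_from_g R _ g) => //; last by apply: gc; rewrite lexx ler01.
  by move=> a a1; apply: hg; apply: lt_le_trans a1.
- exact: m3.
- move=> Hr gamma Hm delta d0 dg.
  apply: (@ivt_from_g R _ g) => //.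
  + by move=> t /andP[t0 t1]; rewrite hg ?invr_gt0 // invrK.
  + by have := hg 1 ltr01; rewrite invr1 => <-; rewrite lerDl.
  + rewrite g0; apply: lt_le_trans Hr.
    have := m3 gamma Hm; lra.
Qed.
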